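(* Let $I$ be an ideal of a multiplicative Lie algebra $G$. Then: (1) if $I\cap[G,G]=1$, then $Z(G/I)=Z(G)/I$; (2) if $I\cap(G\star G)=1$, then $LZ(G/I)=LZ(G)/I$; (3) if $I\cap{}^M[G,G]=1$, then $\mathcal Z(G/I)=\mathcal Z(G)/I$.
   Context: A multiplicative Lie algebra is a group $(G,\cdot)$ with a binary operation $\star$ such that for all $x,y,z\in G$: $x\star x=1$; $x\star(yz)=(x\star y)\,{}^y(x\star z)$; $(xy)\star z={}^x(y\star z)(x\star z)$; $((x\star y)\star{}^yz)((y\star z)\star{}^zx)((z\star x)\star{}^xy)=1$; ${}^z(x\star y)={}^zx\star{}^zy$, where ${}^xy=xyx^{-1}$. An ideal is a normal subgroup $I$ with $x\star y\in I$ for all $x\in G$, $y\in I$; $G/I$ carries the induced structure. $Z(G)$ is the group center, $LZ(G)=\{x\in G: x\star y=1\ \forall y\in G\}$ the Lie center, $\mathcal Z(G)=LZ(G)\cap Z(G)$; $[G,G]$ is the commutator subgroup, $G\star G$ the ideal generated by all $a\star b$, and ${}^M[G,G]=(G\star G)[G,G]$. *)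

(* Defs.v *)
Record MLA := {
  carrier :> Type;
  mul : carrier -> carrier -> carrier;
  one : carrier;
  inv : carrier -> carrier;
  star : carrier -> carrier -> carrier;
  mulA : forall x y z, mul x (mul y z) = mul (mul x y) z;
  mul1x : forall x, mul one x = x;
  mulx1 : forall x, mul x one = x;
  mulVx : forall x, mul (inv x) x = one;
  mulxV : forall x, mul x (inv x) = one;
  (* multiplicative Lie algebra axioms, with ^x y = x y x^-1 *)
  star_xx : forall x, star x x = one;
  star_xM : forall x y z,
      star x (mul y z) = mul (star x y) (mul (mul y (star x z)) (inv y));
  star_Mx : forall x y z,
      star (mul x y) z = mul (mul (mul x (star y z)) (inv x)) (star x z);
  star_jacobi : forall x y z,
      mul (mul (star (star x y) (mul (mul y z) (inv y)))
               (star (star y z) (mul (mul z x) (inv z))))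
          (star (star z x) (mul (mul x y) (inv x))) = one;
  star_conj : forall x y z,
      mul (mul z (star x y)) (inv z)
      = star (mul (mul z x) (inv z)) (mul (mul z y) (inv z))
}.

Arguments mul {m}. Arguments one {m}. Arguments inv {m}. Arguments star {m}.

Section Defs.
Variable G : MLA.

Definition conjg (x y : G) : G := mul (mul x y) (inv x).
Definition commg (x y : G) : G := mul (mul x y) (mul (inv x) (inv y)).

Definition center (x : G) : Prop := forall y : G, mul x y = mul y x.
Definition lie_center (x : G) : Prop := forall y : G, star x y = one.
Definition mcenter (x : G) : Prop := lie_center x /\ center x.

Definition subgroup (S : G -> Prop) : Prop :=
  S one /\ (forall x y, S x -> S y -> S (mul x y)) /\ (forall x, S x -> S (inv x)).
Definition normal (S : G -> Prop) : Prop :=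
  subgroup S /\ (forall x y, S y -> S (conjg x y)).
Definition ideal (S : G -> Prop) : Prop :=
  normal S /\ (forall x y, S y -> S (star x y)).

Definition comm_subgroup (z : G) : Prop :=
  forall S, subgroup S -> (forall x y, S (commg x y)) -> S z.
Definition star_ideal (z : G) : Prop :=
  forall S, ideal S -> (forall x y, S (star x y)) -> S z.
Definition Mcomm (z : G) : Prop :=
  exists a b, star_ideal a /\ comm_subgroup b /\ z = mul a b.

Definition trivial_meet (A B : G -> Prop) : Prop :=
  forall x, A x -> B x -> x = one.
End Defs.
Arguments center {G} x. Arguments ideal {G} S. Arguments subgroup {G} S. Arguments normal {G} S. Arguments trivial_meet {G} A B. Arguments conjg {G} x y. Arguments commg {G} x y. Arguments lie_center {G} x. Arguments mcenter {G} x.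

Definition mla_hom (G H : MLA) (f : G -> H) : Prop :=
  (forall x y, f (mul x y) = mul (f x) (f y)) /\
  (forall x y, f (star x y) = star (f x) (f y)).
Arguments mla_hom {G H} f.

(* (Q, pi) is a presentation of the quotient G/I: pi is a surjective MLA
   homomorphism with kernel exactly I (so Q ≅ G/I with the induced structure,
   and pi corresponds to the canonical projection). *)
Definition is_quotient (G : MLA) (I : G -> Prop) (Q : MLA) (pi : G -> Q) : Prop :=
  mla_hom pi /\ (forall q : Q, exists x, pi x = q) /\
  (forall x, pi x = one <-> I x).
Arguments is_quotient {G} I {Q} pi.

Definition qimage (G Q : MLA) (pi : G -> Q) (A : G -> Prop) (q : Q) : Prop :=
  exists x, A x /\ pi x = q.
Arguments qimage {G Q} pi A q.

(* Main.v *)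
Require Import Defs.

Section Aux.
Variable H : MLA.

Lemma eq_inv (a b : H) : mul a b = one -> a = inv b.
Proof.
  intro E. rewrite <- (mulx1 H a), <- (mulxV H b), (mulA H), E, (mul1x H). reflexivity.
Qed.

Lemma yx_inv (x y : H) : mul (mul y x) (mul (inv x) (inv y)) = one.
Proof.
  rewrite (mulA H). rewrite <- (mulA H y x (inv x)). rewrite (mulxV H), (mulx1 H), (mulxV H).
  reflexivity.
Qed.

Lemma commg_one (x y : H) : commg x y = one -> mul x y = mul y x.
Proof.
  unfold commg. intro E. rewrite (eq_inv _ _ E), (eq_inv _ _ (yx_inv x y)). reflexivity.
Qed.

Lemma commg_one' (x y : H) : mul x y = mul y x -> commg x y = one.
Proof. unfold commg. intro E. rewrite E. apply yx_inv. Qed.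
End Aux.

Section Q.
Variables (G : MLA) (I : G -> Prop) (hI : ideal I) (Q : MLA) (pi : G -> Q)
  (hq : is_quotient I pi).

Lemma I_one : I one.
Proof. destruct hI as [[[h _] _] _]. exact h. Qed.

Lemma pi_one : pi one = one.
Proof. destruct hq as [_ [_ K]]. apply K. apply I_one. Qed.

Lemma pi_mul x y : pi (mul x y) = mul (pi x) (pi y).
Proof. destruct hq as [[h _] _]. apply h. Qed.

Lemma pi_star x y : pi (star x y) = star (pi x) (pi y).
Proof. destruct hq as [[_ h] _]. apply h. Qed.

Lemma pi_inv x : pi (inv x) = inv (pi x).
Proof. apply eq_inv. rewrite <- pi_mul, (mulVx G). apply pi_one. Qed.

Lemma pi_commg x y : pi (commg x y) = commg (pi x) (pi y).
Proof. unfold commg. rewrite !pi_mul, !pi_inv. reflexivity. Qed.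

Lemma ker x : pi x = one -> I x.
Proof. destruct hq as [_ [_ K]]. apply K. Qed.

Lemma surj q : exists x, pi x = q.
Proof. destruct hq as [_ [S _]]. apply S. Qed.

Lemma center_img x : center x -> center (pi x).
Proof.
  intros C q. destruct (surj q) as [y <-]. rewrite <- !pi_mul, C. reflexivity.
Qed.

Lemma lie_img x : lie_center x -> lie_center (pi x).
Proof.
  intros C q. destruct (surj q) as [y <-]. rewrite <- pi_star, C. apply pi_one.
Qed.

Lemma center_pre x : center (pi x) -> forall y, I (commg x y).
Proof.
  intros C y. apply ker. rewrite pi_commg. apply commg_one'. apply C.
Qed.

Lemma lie_pre x : lie_center (pi x) -> forall y, I (star x y).
Proof. intros C y. apply ker. rewrite pi_star. apply C. Qed.
End Q.

Theorem lemma3p1 (G : MLA) (I : G -> Prop) (hI : ideal I) :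
  (trivial_meet I (comm_subgroup G) ->
     forall (Q : MLA) (pi : G -> Q), is_quotient I pi ->
       forall q : Q, center q <-> qimage pi center q) /\
  (trivial_meet I (star_ideal G) ->
     forall (Q : MLA) (pi : G -> Q), is_quotient I pi ->
       forall q : Q, lie_center q <-> qimage pi lie_center q) /\
  (trivial_meet I (Mcomm G) ->
     forall (Q : MLA) (pi : G -> Q), is_quotient I pi ->
       forall q : Q, mcenter q <-> qimage pi mcenter q).
Proof.
  assert (CS : forall x y : G, comm_subgroup G (commg x y)).
  { intros x y S _ h. apply h. }
  assert (SI : forall x y : G, star_ideal G (star x y)).
  { intros x y S _ h. apply h. }
  assert (CS1 : comm_subgroup G one).
  { intros S [h _] _. exact h. }
  assert (SI1 : star_ideal G one).
  { intros S [[[h _] _] _] _. exact h. }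
  split; [|split].
  - intros T Q pi hq q. split.
    + intro C. destruct (surj _ _ _ _ hq q) as [x <-]. exists x. split; [|reflexivity].
      intro y. apply commg_one. apply T; [apply (center_pre _ _ hI _ _ hq); exact C|apply CS].
    + intros [x [C <-]]. apply (center_img _ _ _ _ hq x C).
  - intros T Q pi hq q. split.
    + intro C. destruct (surj _ _ _ _ hq q) as [x <-]. exists x. split; [|reflexivity].
      intro y. apply T; [apply (lie_pre _ _ _ _ hq); exact C|apply SI].
    + intros [x [C <-]]. apply (lie_img _ _ hI _ _ hq x C).
  - intros T Q pi hq q. split.
    + intros [L C]. destruct (surj _ _ _ _ hq q) as [x <-]. exists x. split; [|reflexivity].
      split.
      * intro y. apply T; [apply (lie_pre _ _ _ _ hq); exact L|].
        exists (star x y), one. split; [apply SI|split; [exact CS1|]]. symmetry. apply mulx1.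
      * intro y. apply commg_one. apply T; [apply (center_pre _ _ hI _ _ hq); exact C|].
        exists one, (commg x y). split; [exact SI1|split; [apply CS|]]. symmetry. apply mul1x.
    + intros [x [[L C] <-]]. split.
      * apply (lie_img _ _ hI _ _ hq x L).
      * apply (center_img _ _ _ _ hq x C).
Qed.
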